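(* Let $a,b,c,d\in\mathbb{Q}$ satisfy $a^4+b^4+c^4+d^4=(a+b+c+d)^4$, with at least three of $a,b,c,d$ non-zero, and let $t=\frac{c^2+cd+d^2}{(a+c+d)(b+c+d)}$. Then $t\neq 1$ and $$\frac{t+1}{t-1}=\frac{a^2+ab+b^2}{(c+a+b)(d+a+b)}.$$
   Context: A solution of $a^4+b^4+c^4+d^4=(a+b+c+d)^4$ is called non-trivial if at least three of $a,b,c,d$ are non-zero. For a non-trivial solution the denominators $(a+c+d)(b+c+d)$ and $(c+a+b)(d+a+b)$ are non-zero. *)

(* Defs.v *)
From mathcomp Require Import all_boot all_order all_algebra.
Set Implicit Arguments. Unset Strict Implicit. Unset Printing Implicit Defensive.
Import Order.TTheory GRing.Theory Num.Theory.
Local Open Scope ring_scope.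

Definition nontrivial (a b c d : rat) : Prop :=
  (3 <= nat_of_bool (a != 0%R) + nat_of_bool (b != 0%R)
       + nat_of_bool (c != 0%R) + nat_of_bool (d != 0%R))%N.

(* Main.v *)
Require Import Defs.
From mathcomp Require Import all_boot all_order all_algebra.
From mathcomp Require Import ring lra.
Import Order.TTheory GRing.Theory Num.Theory.
Local Open Scope ring_scope.

Lemma key_id (a b c d : rat) :
  let N := c ^+ 2 + c * d + d ^+ 2 in let X := (a + c + d) * (b + c + d) in
  let M := a ^+ 2 + a * b + b ^+ 2 in let Y := (c + a + b) * (d + a + b) in
  2 * ((N + X) * Y - M * (N - X)) + (a ^+ 4 + b ^+ 4 + c ^+ 4 + d ^+ 4 - (a + b + c + d) ^+ 4) = 0.
Proof. move=> N X M Y; rewrite /N /X /M /Y; ring. Qed.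

Lemma zero3 (x z w : rat) : x ^+ 4 + z ^+ 4 + w ^+ 4 = 0 -> x = 0 /\ z = 0 /\ w = 0.
Proof.
move=> H.
have hx : 0 <= x ^+ 4 by rewrite (_ : 4 = 2 * 2)%N // exprM sqr_ge0.
have hz : 0 <= z ^+ 4 by rewrite (_ : 4 = 2 * 2)%N // exprM sqr_ge0.
have hw : 0 <= w ^+ 4 by rewrite (_ : 4 = 2 * 2)%N // exprM sqr_ge0.
have ex : x ^+ 4 = 0 by lra.
have ez : z ^+ 4 = 0 by lra.
have ew : w ^+ 4 = 0 by lra.
by move: ex ez ew => /eqP; rewrite expf_eq0 => /andP[_ /eqP->] /eqP;
  rewrite expf_eq0 => /andP[_ /eqP->] /eqP; rewrite expf_eq0 => /andP[_ /eqP->].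
Qed.

Theorem mainTheorem2 (a b c d : rat) :
  a ^+ 4 + b ^+ 4 + c ^+ 4 + d ^+ 4 = (a + b + c + d) ^+ 4 ->
  nontrivial a b c d ->
  let t := (c ^+ 2 + c * d + d ^+ 2) / ((a + c + d) * (b + c + d)) in
  t != 1 /\
  (t + 1) / (t - 1) = (a ^+ 2 + a * b + b ^+ 2) / ((c + a + b) * (d + a + b)).
Proof.
move=> H nt t.
have K := key_id a b c d; simpl in K.
have h1 : a + c + d != 0.
  apply/eqP => e; have [ea [ec ed]] : a = 0 /\ c = 0 /\ d = 0.
    apply: zero3; have hs : a + b + c + d = b by lra.
    by rewrite hs in H; lra.
  by move: nt; rewrite /nontrivial ea ec ed eqxx /=; case: (b != 0).
have h2 : b + c + d != 0.
  apply/eqP => e; have [ea [ec ed]] : b = 0 /\ c = 0 /\ d = 0.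
    apply: zero3; have hs : a + b + c + d = a by lra.
    by rewrite hs in H; lra.
  by move: nt; rewrite /nontrivial ea ec ed eqxx /=; case: (a != 0).
have h3 : c + a + b != 0.
  apply/eqP => e; have [ea [ec ed]] : c = 0 /\ a = 0 /\ b = 0.
    apply: zero3; have hs : a + b + c + d = d by lra.
    by rewrite hs in H; lra.
  by move: nt; rewrite /nontrivial ea ec ed eqxx /=; case: (d != 0).
have h4 : d + a + b != 0.
  apply/eqP => e; have [ea [ec ed]] : d = 0 /\ a = 0 /\ b = 0.
    apply: zero3; have hs : a + b + c + d = c by lra.
    by rewrite hs in H; lra.
  by move: nt; rewrite /nontrivial ea ec ed eqxx /=; case: (c != 0).
have hX : (a + c + d) * (b + c + d) != 0 by rewrite mulf_neq0.
have hY : (c + a + b) * (d + a + b) != 0 by rewrite mulf_neq0.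
set N := c ^+ 2 + c * d + d ^+ 2 in K t *.
set X := (a + c + d) * (b + c + d) in K t hX *.
set M := a ^+ 2 + a * b + b ^+ 2 in K *.
set Y := (c + a + b) * (d + a + b) in K hY *.
have E : (N + X) * Y - M * (N - X) = 0.
  by rewrite H subrr addr0 in K; move: K => /eqP; rewrite mulf_eq0 /= => /eqP.
have hNX : N - X != 0.
  apply/eqP => e; move: E; rewrite e mulr0 subr0.
  have -> : N + X = 2 * X by lra.
  by move/eqP; apply/negP; rewrite mulf_neq0 // mulf_neq0.
have ht : t - 1 != 0.
  suff -> : t - 1 = (N - X) / X by rewrite mulf_neq0 ?invr_eq0.
  by rewrite /t; field.
split; first by move: ht; rewrite subr_eq0.
have -> : (t + 1) / (t - 1) = (N + X) / (N - X).
  by rewrite /t; field; rewrite hX hNX.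
apply/eqP; rewrite eqr_div //; apply/eqP; lra.
Qed.
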